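(* Let $k$ be a field, $e, h \geq 1$ integers, and $M$ a finite-dimensional $k[T]/T^e$-module generated by at most $h$ elements. For $1 \leq i \leq e$ let $\delta_i := \dim_k M[T^i]/M[T^{i-1}]$ (so $\delta_1 \geq \dots \geq \delta_e$). Then $\mathrm{Hdg}(M) = P(\delta_1, \dots, \delta_e)$.
   Context: $M[T^i]$ denotes the kernel of multiplication by $T^i$ on $M$. For integers $d_1,\dots,d_N \in [0,h]$, $P(d_1,\dots,d_N)$ is the function on $[0,h]$ given by $x \mapsto \frac{1}{N}\sum_{i=1}^N \max(0, x+d_i-h)$. Writing $M \simeq \bigoplus_{i=1}^h k[T]/T^{a_i}$ with integers $0 \leq a_i \leq e$, the Hodge polygon $\mathrm{Hdg}(M)$ is the convex polygon on $[0,h]$ starting at the origin whose slopes are $\frac{a_1}{e}, \dots, \frac{a_h}{e}$ (each on an interval of length $1$, arranged in increasing order). *)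

(* Defs.v *)
From HB Require Import structures.
From mathcomp Require Import all_boot all_order all_algebra.
Set Implicit Arguments. Unset Strict Implicit. Unset Printing Implicit Defensive.
Import Order.TTheory GRing.Theory Num.Theory.
Local Open Scope ring_scope.

Definition lpow (k : fieldType) (M : vectType k) (T : 'End(M)) (i : nat) : 'End(M) :=
  iter i (fun f => (T \o f)%VF) \1%VF.

Definition Mker (k : fieldType) (M : vectType k) (T : 'End(M)) (i : nat) : {vspace M} :=
  lker (lpow T i).

(* delta_i = dim_k M[T^i] / M[T^(i-1)] = dim M[T^i] - dim M[T^(i-1)] *)
Definition delta (k : fieldType) (M : vectType k) (T : 'End(M)) (i : nat) : nat :=
  (\dim (Mker T i) - \dim (Mker T i.-1))%N.

(* M is generated, as a k[T]-module, by at most h elements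
   (T^e = 0, so the T^j g with j < e span the submodule generated by g). *)
Definition gen_by_at_most (k : fieldType) (M : vectType k) (T : 'End(M)) (e h : nat) : Prop :=
  exists g : seq M, (size g <= h)%N /\
    <<[seq lpow T j x | x <- g, j <- iota 0 e]>>%VS = fullv.

(* M = (+)_{i<h} k[T] v_i with k[T] v_i ~ k[T]/T^(a_i): i.e. the vectors
   T^j v_i (j < a_i) form a k-basis of M and T^(a_i) v_i = 0. *)
Definition cyclic_decomp (k : fieldType) (M : vectType k) (T : 'End(M)) (h : nat)
    (a : 'I_h -> nat) (v : 'I_h -> M) : Prop :=
  (forall i, lpow T (a i) (v i) = 0) /\
  basis_of fullv [seq lpow T j (v i) | i <- enum 'I_h, j <- iota 0 (a i)].

Definition clamp01 (R : realFieldType) (y : R) : R := Num.min 1 (Num.max 0 y).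

(* Hodge polygon on [0,h] of exponents as (list of length h):
   convex polygon from the origin with slopes a_(j)/e (sorted increasingly),
   slope number j (0-based) on the interval [j, j+1]. *)
Definition Hdg (R : realFieldType) (e : nat) (as_ : seq nat) (x : R) : R :=
  let s := sort leq as_ in
  \sum_(j < size s) ((nth 0%N s j)%:R / e%:R) * clamp01 (x - j%:R).

Definition Ppoly (R : realFieldType) (h : nat) (d : seq nat) (x : R) : R :=
  (size d)%:R^-1 * \sum_(di <- d) Num.max 0 (x + di%:R - h%:R).

(* Main.v *)
Require Import Defs.
From HB Require Import structures.
From mathcomp Require Import all_boot all_order all_algebra.
From mathcomp Require Import zify ring lra.
Import Order.TTheory GRing.Theory Num.Theory.
Local Open Scope ring_scope.

Lemma lpowE (k : fieldType) (M : vectType k) (T : 'End(M)) n x :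
  lpow T n x = iter n T x.
Proof.
elim: n => [|n IH] /=; first by rewrite /lpow /= id_lfunE.
by rewrite /lpow /= comp_lfunE -/(lpow T n) IH.
Qed.

Lemma lpowD (k : fieldType) (M : vectType k) (T : 'End(M)) m n x :
  lpow T (m + n) x = lpow T m (lpow T n x).
Proof. by rewrite !lpowE iterD. Qed.

Lemma perm_flatten_cat (I V : eqType) (F G : I -> seq V) (s : seq I) :
  perm_eq (flatten [seq F l ++ G l | l <- s])
          (flatten [seq F l | l <- s] ++ flatten [seq G l | l <- s]).
Proof.
elim: s => [|x s IH] //=.
rewrite -!catA perm_cat2l.
idtac.
by rewrite perm_sym perm_catCA perm_cat2l perm_sym.
Qed.

Lemma sumn_map (I : finType) (f : I -> nat) :
  sumn [seq f l | l <- enum I] = (\sum_(l : I) f l)%N.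
Proof. by rewrite sumnE big_map big_enum. Qed.

Lemma dim_ker (k : fieldType) (M : vectType k) (T : 'End(M)) (h : nat)
    (a : 'I_h -> nat) (v : 'I_h -> M) (i : nat) :
  cyclic_decomp T a v ->
  \dim (Mker T i) = (\sum_(l < h) minn (a l) i)%N.
Proof.
move=> [Hz /andP[/eqP spanB freeB]].
set B := [seq _ | l <- _, j <- _] in spanB freeB.
set f := lpow T i.
set C := flatten [seq drop i [seq lpow T j (v l) | j <- iota 0 (a l)] | l <- enum 'I_h].
have HK := limg_ker_dim f fullv.
rewrite capfv in HK.
have dimB : \dim (fullv : {vspace M}) = size B by rewrite -spanB; exact/eqP.
have permB : perm_eq B (flatten [seq take i [seq lpow T j (v l) | j <- iota 0 (a l)] | l <- enum 'I_h] ++ C).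
  have -> : B = flatten [seq take i [seq lpow T j (v l) | j <- iota 0 (a l)] ++ drop i [seq lpow T j (v l) | j <- iota 0 (a l)] | l <- enum 'I_h].
    by rewrite /B; congr flatten; apply: eq_map => l; rewrite cat_take_drop.
  exact: perm_flatten_cat.
have freeC : free C by move: freeB; rewrite (perm_free permB); apply: catr_free.
have imgC : (f @: fullv)%VS = <<C>>%VS.
  rewrite -spanB limg_span; apply/eqP; rewrite eqEsubv; apply/andP; split.
    apply/span_subvP => y /mapP [z /allpairsPdep [l [j [_ Hj ->]]] ->].
    rewrite mem_iota /= add0n in Hj.
    rewrite /f -lpowD.
    case: (ltnP (i + j) (a l)) => Hij.
      apply: memv_span; apply/flatten_mapP; exists l; first by rewrite mem_enum.
      rewrite -map_drop drop_iota add0n; apply: map_f.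
      by rewrite mem_iota; lia.
    have -> : (i + j = (i + j - a l) + a l)%N by lia.
    by rewrite lpowD Hz linear0 mem0v.
  apply/span_subvP => y /flatten_mapP [l _].
  rewrite -map_drop drop_iota add0n => /mapP [j]; rewrite mem_iota => Hj ->.
  apply: memv_span; apply/mapP; exists (lpow T (j - i) (v l)).
    apply/allpairsPdep; exists l, (j - i)%N; split => //; first by rewrite mem_enum.
    by rewrite mem_iota; lia.
  by rewrite /f -lpowD; congr (lpow T _ _); lia.
have dimC : \dim <<C>> = size C by exact/eqP.
have sizeC : size C = (\sum_(l < h) (a l - i))%N.
  rewrite size_flatten /shape -map_comp -sumn_map; congr sumn; apply: eq_map => l /=.
  by rewrite size_drop size_map size_iota.
have sizeB : size B = (\sum_(l < h) a l)%N.
  by rewrite size_allpairs_dep -sumn_map; congr sumn; apply: eq_map => l; rewrite size_iota.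
rewrite imgC dimC sizeC dimB sizeB in HK.
rewrite /Mker -/f.
have E : (\sum_(l < h) a l = \sum_(l < h) minn (a l) i + \sum_(l < h) (a l - i))%N.
  rewrite -big_split /=; apply: eq_bigr => l _; lia.
rewrite E in HK; lia.
Qed.
Lemma clampE (R : realFieldType) (x : R) :
  Num.max 0 x = Num.max 0 (x - 1) + clamp01 x.
Proof.
rewrite /clamp01.
case: (lerP 0 x) => H0; case: (lerP 0 (x-1)) => H1; case: (lerP 1 x) => H2; try lra.
all: by case: (lerP 1 (0:R)) => H3; lra.
Qed.

Lemma sum_ind (R : realFieldType) (r : seq nat) (P : pred nat) (c : R) :
  \sum_(i <- r) (P i)%:R * c = (count P r)%:R * c.
Proof.
elim: r => [|y r IH]; first by rewrite big_nil mul0r.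
by rewrite big_cons IH /= natrD mulrDl.
Qed.

Lemma count_iota_le (e y : nat) : (y <= e)%N ->
  count (fun i => i <= y)%N (iota 1 e) = y.
Proof.
move=> Hy; rewrite -(subnKC Hy) iotaD count_cat.
rewrite (@eq_in_count _ _ predT (iota 1 y)); last first.
  by move=> i; rewrite mem_iota /=; lia.
rewrite count_predT size_iota.
rewrite (@eq_in_count _ _ pred0 (iota _ _)); last first.
  by move=> i; rewrite mem_iota /=; lia.
by rewrite count_pred0 addn0.
Qed.

Lemma key (R : realFieldType) (e : nat) (s : seq nat) (x : R) :
  sorted leq s -> all (fun y => y <= e)%N s -> x <= (size s)%:R ->
  \sum_(j < size s) (nth 0%N s j)%:R * clamp01 (x - j%:R)
  = \sum_(i <- iota 1 e) Num.max 0 (x + (count (fun y => i <= y)%N s)%:R - (size s)%:R).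
Proof.
elim: s x => [|y s IH] x Hs Ha Hx.
  rewrite big_ord0 big1_seq // => i _ /=.
  move: Hx; rewrite /= !mulr0n addr0 subr0 => Hx; case: (lerP 0 x) => //= H; lra.
have Hs' : sorted leq s := path_sorted Hs.
have Hmin : all (fun z => y <= z)%N s := order_path_min leq_trans Hs.
move: Ha => /= /andP [Hye Ha].
rewrite big_ord_recl /= subr0.
have -> : \sum_(i < size s) (nth 0%N (y :: s) (lift ord0 i))%:R * clamp01 (x - (lift ord0 i)%:R)
        = \sum_(i < size s) (nth 0%N s i)%:R * clamp01 ((x - 1) - i%:R).
  apply: eq_bigr => i _ /=; congr (_ * clamp01 _).
  by rewrite /bump add1n -addn1 natrD; ring.
rewrite (IH (x - 1)) //; last by move: Hx; rewrite /= -addn1 natrD; lra.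
rewrite -[X in X%:R * clamp01 x](count_iota_le _ _ Hye) -sum_ind -big_split /=.
apply: eq_big_seq => i _ /=.
case: (leqP i y) => Hiy /=.
  have -> : count (fun z => i <= z)%N s = size s.
    apply/eqP; rewrite -all_count; apply/allP => z Hz.
    by move/allP: Hmin => /(_ z Hz); lia.
  rewrite mul1r add1n -addn1 natrD.
  have -> : x - 1 + (size s)%:R - (size s)%:R = x - 1 by ring.
  have -> : x + ((size s)%:R + 1) - ((size s)%:R + 1) = x by ring.
  by rewrite (@clampE _ x) addrC.
rewrite mul0r add0n -addn1 natrD.
by rewrite add0r; congr (Num.max 0 _); ring.
Qed.

Lemma count_map_sum (h : nat) (a : 'I_h -> nat) (P : pred nat) (r : seq 'I_h) :
  count P [seq a l | l <- r] = (\sum_(l <- r) (P (a l) : nat))%N.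
Proof.
elim: r => [|y r IH]; first by rewrite big_nil.
by rewrite /= big_cons IH.
Qed.

Lemma delta_count (k : fieldType) (M : vectType k) (T : 'End(M)) (h : nat)
    (a : 'I_h -> nat) (v : 'I_h -> M) (i : nat) :
  cyclic_decomp T a v -> (1 <= i)%N ->
  delta T i = count (fun y => i <= y)%N [seq a l | l <- enum 'I_h].
Proof.
move=> Hc Hi; rewrite /delta !(@dim_ker _ _ _ _ _ _ i.-1 Hc) !(@dim_ker _ _ _ _ _ _ i Hc).
rewrite count_map_sum big_enum /=.
have -> : (\sum_(l < h) minn (a l) i = \sum_(l < h) minn (a l) i.-1 + \sum_(l < h) (i <= a l : nat))%N.
  rewrite -big_split /=; apply: eq_bigr => l _.
  case: (leqP i (a l)) => H /=; lia.
by rewrite addKn.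
Qed.

Theorem mainTheorem3 (k : fieldType) (M : vectType k) (T : 'End(M)) (e h : nat) :
  (1 <= e)%N -> (1 <= h)%N ->
  lpow T e = 0 ->
  gen_by_at_most T e h ->
  forall (a : 'I_h -> nat) (v : 'I_h -> M),
    (forall i, (a i <= e)%N) ->
    cyclic_decomp T a v ->
  forall (R : realFieldType) (x : R), 0 <= x <= h%:R ->
    Hdg e [seq a i | i <- enum 'I_h] x
    = Ppoly h [seq delta T i | i <- iota 1 e] x.
Proof.
move=> He Hh HTe Hgen a v Hae Hc R x /andP [Hx0 Hxh].
set s := sort leq [seq a i | i <- enum 'I_h].
have Hsz : size s = h by rewrite size_sort size_map size_enum_ord.
have Hd : [seq delta T i | i <- iota 1 e] = [seq count (fun y => i <= y)%N s | i <- iota 1 e].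
  apply/eq_in_map => i; rewrite mem_iota => /andP [Hi _].
  by rewrite (@delta_count _ _ _ _ _ _ i Hc Hi) count_sort.
rewrite /Ppoly Hd size_map size_iota big_map /Hdg -/s.
have -> : \sum_(j < size s) (nth 0%N s j)%:R / e%:R * clamp01 (x - j%:R)
        = e%:R^-1 * \sum_(j < size s) (nth 0%N s j)%:R * clamp01 (x - j%:R).
  rewrite big_distrr /=; apply: eq_bigr => j _.
  by rewrite mulrA [_^-1 * _]mulrC.
rewrite (@key _ e); rewrite ?Hsz //.
  by rewrite /s; apply: sort_sorted; exact: leq_total.
rewrite all_sort; apply/allP => y /mapP [l _ ->]; exact: Hae.
Qed.
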